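(* Let $P_{00},P_{01},P_{10},P_{11}$ be strictly positive random variables on a probability space, and set $P_0=P_{00}+P_{01}$, $P_1=P_{10}+P_{11}$, $$\Lambda_1=\ln\frac{P_0}{P_1},\qquad \Lambda_2=\ln\frac{P_{00}}{P_{01}},\qquad \alpha=\frac{\min\{P_{10},P_{11}\}}{P_1}.$$ Let $\mathcal C$ be the event that $P_{00}$ is at least the second largest element of the multiset $\{P_{00},P_{01},P_{10},P_{11}\}$. Then $$\Pr(\mathcal C)\ \le\ \Pr(\Lambda_1\ge 0,\ \Lambda_2\ge 0)\ +\ \Pr\!\big(\Lambda_1\ge 0,\ -\ln(2e^{\Lambda_1}-1)\le \Lambda_2<0\big)\ +\ \Pr(\ln\alpha\le \Lambda_1<0).$$
   Context: This is the list-size-$L=2$ case of the analysis of SCL decoding of polar codes. There, for an information-bit index $k$, $P_{v_{k-1}v_k}=P(v_{k-1}\mid \mathbf y,\mathbf 0_1^{k-2})\,P(v_k\mid \mathbf y,\mathbf 0_1^{k-2},v_{k-1})$ is the posterior path metric of the extension $(v_{k-1},v_k)$ of the all-zero prefix, $\Lambda_1=\mathsf L_{k-1}$ and $\Lambda_2=\mathsf L_k$ are the log-likelihood ratios of information bits $k-1$ and $k$ given that all previous information bits are $0$, and $\mathcal C=\mathcal C_k$ is the event that the correct all-zero path survives in the list of size $2$ at step $k$ given that the list at step $k-1$ consists of the two extensions of the all-zero prefix. Note $2e^{\Lambda_1}-1\ge 1$ on $\{\Lambda_1\ge0\}$, so the logarithm is well defined there. *)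

(* Defs.v *)
From HB Require Import structures.
From mathcomp Require Import all_boot all_order all_algebra.
From mathcomp Require Import all_classical all_reals all_analysis.
Set Implicit Arguments. Unset Strict Implicit. Unset Printing Implicit Defensive.
Import Order.TTheory GRing.Theory Num.Theory.
Local Open Scope ring_scope.

Definition second_largest (R : realDomainType) (a b c d : R) : R :=
  nth 0 (sort (fun x y : R => y <= x) [:: a; b; c; d]) 1.

(* Main.v *)
Require Import Defs.
From HB Require Import structures.
From mathcomp Require Import all_boot all_order all_algebra.
From mathcomp Require Import all_classical all_reals all_analysis.
From mathcomp Require Import ring lra.
From mathcomp Require Import measurable_realfun.
Import Order.TTheory GRing.Theory Num.Theory.
Local Open Scope ring_scope.
Local Open Scope classical_set_scope.
Lemma sl (R : realType) (a b c e : R) : (second_largest a b c e <= a) =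
  [|| (b<=a)&&(c<=a), (b<=a)&&(e<=a) | (c<=a)&&(e<=a)].
Proof. rewrite /second_largest /sort /=.
repeat (case: ifP => /=; let H := fresh "H" in move=> H;
  try (move/negbT: H; rewrite -ltNge => H)).
all: repeat (case: leP => ? /=); try done; exfalso; lra.
Qed.
Lemma key (R : realType) (a b c e : R) : 0 < a -> 0 < b -> 0 < c -> 0 < e ->
  c + e <= a + b -> a < b -> c <= a -> e <= a ->
  - ln (2 * expR (ln ((a+b)/(c+e))) - 1) <= ln (a / b).
Proof.
move=> a0 b0 c0 e0 h1 h2 h3 h4.
have ce0 : 0 < c + e by lra.
have r0 : 0 < (a+b)/(c+e) by rewrite divr_gt0 //; lra.
rewrite lnK ?posrE //.
set r := (a+b)/(c+e).
have hr : r * (c+e) = a+b by rewrite /r mulfVK //; lra.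
have r1 : 1 <= r by rewrite /r ler_pdivlMr //; lra.
have y0 : 0 < 2 * r - 1 by lra.
have q0 : 0 < a / b by rewrite divr_gt0.
set q := a / b in q0 *.
have hq : q * b = a by rewrite /q mulfVK //; lra.
rewrite lerNl -lnV ?posrE // ler_ln ?posrE ?invr_gt0 //.
rewrite /q invf_div ler_pdivrMr // -(ler_pM2r ce0).
have -> : (2*r-1)*a*(c+e) = a*(2*(a+b)-(c+e)) by rewrite -hr; ring.
nra.
Qed.


Lemma incl (R : realType) (a b c e : R) : 0 < a -> 0 < b -> 0 < c -> 0 < e ->
  [|| (b<=a)&&(c<=a), (b<=a)&&(e<=a) | (c<=a)&&(e<=a)] ->
  ((0 <= ln ((a+b)/(c+e)) /\ 0 <= ln (a/b)) \/
   (0 <= ln ((a+b)/(c+e)) /\ - ln (2 * expR (ln ((a+b)/(c+e))) - 1) <= ln (a/b)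
     /\ ln (a/b) < 0)) \/
  (ln (Num.min c e / (c+e)) <= ln ((a+b)/(c+e)) /\ ln ((a+b)/(c+e)) < 0).
Proof.
move=> a0 b0 c0 e0 hC.
have ce0 : 0 < c + e by lra.
have r0 : 0 < (a+b)/(c+e) by rewrite divr_gt0 //; lra.
have q0 : 0 < a/b by rewrite divr_gt0.
have [h1|h1] := leP (c+e) (a+b).
  have L1 : 0 <= ln ((a+b)/(c+e)) by apply: ln_ge0; rewrite ler_pdivlMr //; lra.
  have [h2|h2] := leP b a.
    left; left; split => //; apply: ln_ge0; rewrite ler_pdivlMr //; lra.
  left; right; split => //; split.
    apply: key => //; move: hC; rewrite (leNgt b a) h2 /=; by case/andP.
  by apply: ln_lt0; rewrite q0 /= ltr_pdivrMr //; lra.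
right; split.
  rewrite ler_ln ?posrE //; last first.
    by rewrite divr_gt0 // lt_min c0 e0.
  rewrite ler_pM2r ?invr_gt0 //.
  rewrite ge_min; case/or3P: hC => /andP[h3 h4]; apply/orP.
  - by left; lra.
  - by right; lra.
  - by left; lra.
by apply: ln_lt0; rewrite r0 /= ltr_pdivrMr //; lra.
Qed.

Lemma mbool d (T : measurableType d) (h : T -> bool) :
  measurable_fun setT h -> measurable [set x | h x].
Proof.
move=> mh; have := mh measurableT [set true] I; rewrite setTI.
by [].
Qed.

Section M.
Context d (T : measurableType d) (R : realType).
Implicit Types f g : T -> R.
Lemma mln f : measurable_fun setT f -> measurable_fun setT (fun x => ln (f x)).
Proof. by move=> mf; apply: measurableT_comp. Qed.
Lemma mexp f : measurable_fun setT f -> measurable_fun setT (fun x => expR (f x)).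
Proof. by move=> mf; apply: measurableT_comp. Qed.
Lemma mopp f : measurable_fun setT f -> measurable_fun setT (fun x => - f x).
Proof. by move=> mf; apply: measurableT_comp. Qed.
Lemma minv f : measurable_fun setT f -> (forall x, 0 < f x) ->
  measurable_fun setT (fun x => (f x)^-1).
Proof.
move=> mf fp.
rewrite (_ : (fun x => _) = (fun x => expR (- ln (f x)))).
  by apply: mexp; apply: mopp; apply: mln.
by apply/funext => x; rewrite expRN lnK // posrE.
Qed.
Lemma mset3 f1 g1 f2 g2 f3 g3 : measurable_fun setT f1 -> measurable_fun setT g1 ->
  measurable_fun setT f2 -> measurable_fun setT g2 ->
  measurable_fun setT f3 -> measurable_fun setT g3 ->
  measurable [set x | f1 x <= g1 x /\ f2 x <= g2 x /\ f3 x < g3 x].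
Proof.
move=> *; apply: measurableI; first by apply: mbool; exact: measurable_fun_ler.
by apply: measurableI; apply: mbool; [exact: measurable_fun_ler|exact: measurable_fun_ltr].
Qed.
Lemma mset2 f1 g1 f2 g2 : measurable_fun setT f1 -> measurable_fun setT g1 ->
  measurable_fun setT f2 -> measurable_fun setT g2 ->
  measurable [set x | f1 x <= g1 x /\ f2 x <= g2 x].
Proof. by move=> *; apply: measurableI; apply: mbool; exact: measurable_fun_ler. Qed.
Lemma mset2' f1 g1 f2 g2 : measurable_fun setT f1 -> measurable_fun setT g1 ->
  measurable_fun setT f2 -> measurable_fun setT g2 ->
  measurable [set x | f1 x <= g1 x /\ f2 x < g2 x].
Proof.
by move=> *; apply: measurableI; apply: mbool; [exact: measurable_fun_ler|exact: measurable_fun_ltr].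
Qed.
End M.

Lemma union_bound (R : realType) d (T : measurableType d) (P : probability T R)
  (h : T -> bool) (B1 B2 B3 : set T) : measurable_fun setT h ->
  measurable B1 -> measurable B2 -> measurable B3 ->
  (forall x, h x -> (B1 x \/ B2 x) \/ B3 x) ->
  (P [set x | h x] <= P B1 + P B2 + P B3)%E.
Proof.
move=> mh m1 m2 m3 hi.
apply: (@le_trans _ _ (P (B1 `|` B2 `|` B3))).
  apply: le_measure; rewrite ?inE; first exact: mbool.
    by apply: measurableU => //; apply: measurableU.
  by move=> x /hi.
apply: (le_trans (measureU2 _ _ _)) => //; first exact: measurableU.
by rewrite leeD2r // measureU2.
Qed.

Theorem proposition2 (R : realType) (d : measure_display) (T : measurableType d)
  (P : probability T R) (P00 P01 P10 P11 : T -> R)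
  (m00 : measurable_fun setT P00) (m01 : measurable_fun setT P01)
  (m10 : measurable_fun setT P10) (m11 : measurable_fun setT P11)
  (h00 : forall x, 0 < P00 x) (h01 : forall x, 0 < P01 x)
  (h10 : forall x, 0 < P10 x) (h11 : forall x, 0 < P11 x) :
  let P0 := fun x => P00 x + P01 x in
  let P1 := fun x => P10 x + P11 x in
  let L1 := fun x => ln (P0 x / P1 x) in
  let L2 := fun x => ln (P00 x / P01 x) in
  let alpha := fun x => Num.min (P10 x) (P11 x) / P1 x in
  (P [set x | second_largest (P00 x) (P01 x) (P10 x) (P11 x) <= P00 x]%R
   <= P [set x | 0 <= L1 x /\ 0 <= L2 x]%R
      + P [set x | 0 <= L1 x /\ - ln (2 * expR (L1 x) - 1) <= L2 x /\ L2 x < 0]%R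
      + P [set x | ln (alpha x) <= L1 x /\ L1 x < 0]%R)%E.
Proof.
cbv zeta.
have p1 : forall x, 0 < P10 x + P11 x by move=> x; apply: addr_gt0.
Ltac mt := repeat first
  [ assumption | exact: measurable_cst | apply: measurable_funD
  | apply: measurable_funB | apply: measurable_funM | apply: measurable_minr
  | (apply: minv; [|assumption]) | apply: mln | apply: mexp | apply: mopp ].
apply: union_bound.
- under eq_fun do rewrite sl.
  apply: measurable_or; [|apply: measurable_or]; apply: measurable_and;
    apply: measurable_fun_ler => //.
- apply: mset2; mt.
- apply: mset3; mt.
- apply: mset2'; mt.
- move=> x; rewrite sl => /incl; apply => //.
Qed.
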